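(* Let $d=3$ and let $V_n$, $n\in\mathbb{N}$, be defined as follows: writing $z=(z_1,\mathbf z_2)\in\mathbb{R}\times\mathbb{R}^2$, $C_{k,r}=[k,k+\tfrac14]\times D_r$ with $D_r\subset\mathbb{R}^2$ the disc of radius $r$ centred at $0$, $f(r)=\frac{1}{r|\ln r|\ln|\ln r|}$ for $r\in(0,e^{-1})$, and $V_n(z)=f\big(\tfrac{z_1}{25n}\big)\sum_{k=1}^n\mathbf 1_{C_{k,\sqrt{k/(25n)}}}(z)$. Then there exist $n_i\in\mathbb{N}$, $i\in\mathbb{N}$, such that $\|K(V_{n_i},1)\|_\infty\ge4^i$ for every $i\in\mathbb{N}$.
   Context: For $d=3$, $t>0$, $x,y\in\mathbb{R}^3$: $K(t,x,y)=e^{-\frac{|x||y|-\langle x,y\rangle}{2}}|x|^{-1}\mathbf 1_{|x|\le t|y|}$, and $\|K(V,t)\|_\infty=\sup_{x,y\in\mathbb{R}^3}\int_{\mathbb{R}^3}K(t,z-x,y)|V(z)|\,dz$. *)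

(* Defs.v *)
(* R^3 is modelled as R * (R * R), i.e. z = (z1, z2)
   with z2 in R^2, equipped with the product Lebesgue measure. *)
From HB Require Import structures.
From mathcomp Require Import all_boot all_order all_algebra.
From mathcomp Require Import all_classical all_reals all_analysis.
Set Implicit Arguments. Unset Strict Implicit. Unset Printing Implicit Defensive.
Import Order.TTheory GRing.Theory Num.Theory.
Local Open Scope ring_scope.

Section Defs.
Variable R : realType.

Definition R3 := (R * (R * R))%type.

Definition lebesgue3 := (@lebesgue_measure R \x (@lebesgue_measure R \x @lebesgue_measure R))%E.

Definition add3 (x y : R3) : R3 := (x.1 + y.1, (x.2.1 + y.2.1, x.2.2 + y.2.2)).
Definition sub3 (x y : R3) : R3 := (x.1 - y.1, (x.2.1 - y.2.1, x.2.2 - y.2.2)).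
Definition dot3 (x y : R3) : R := x.1 * y.1 + x.2.1 * y.2.1 + x.2.2 * y.2.2.
Definition norm3 (x : R3) : R := Num.sqrt (dot3 x x).

Definition Kker (t : R) (x y : R3) : R :=
  expR (- ((norm3 x * norm3 y - dot3 x y) / 2)) * (norm3 x)^-1 *
  (if norm3 x <= t * norm3 y then 1 else 0).

Definition Knorm (V : R3 -> R) (t : R) : \bar R :=
  ereal_sup [set (\int[lebesgue3]_z (Kker t (sub3 z x) y * `|V z|)%:E)%E
            | x in [set: R3] & y in [set: R3]].

(* f(r) = 1/(r |ln r| ln|ln r|) on (0, e^{-1}); set to 0 elsewhere (never
   used there) *)
Definition fpot (r : R) : R :=
  if (0 < r) && (r < expR (-1)) then (r * `|ln r| * ln `|ln r|)^-1 else 0.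

Definition Ccyl (k : nat) (r : R) : set R3 :=
  [set z | k%:R <= z.1 <= k%:R + 4^-1 /\ z.2.1 ^+ 2 + z.2.2 ^+ 2 <= r ^+ 2].

Definition Vn (n : nat) (z : R3) : R :=
  fpot (z.1 / (25 * n%:R)) *
  \sum_(1 <= k < n.+1) \1_(Ccyl k (Num.sqrt (k%:R / (25 * n%:R)))) z.

End Defs.

(* Main.v *)
Require Import Defs.
From HB Require Import structures.
From mathcomp Require Import all_boot all_order all_algebra.
From mathcomp Require Import all_classical all_reals all_analysis.
From mathcomp Require Import measurable_realfun.
From mathcomp Require Import ring lra.
Import Order.TTheory GRing.Theory Num.Theory numFieldNormedType.Exports.
Local Open Scope ring_scope.

Section Reals.
Variable R : realType.
Implicit Types x y : R.

Lemma ln_diff_le {x y} : 0 < x -> 0 < y -> ln x - ln y <= (x - y) / y.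
Proof.
move=> x0 y0.
rewrite -ln_div ?posrE//.
have -> : x / y = 1 + (x - y) / y by field; rewrite gt_eqF.
apply: le_ln1Dx.
have : 0 < x / y by exact: divr_gt0.
have -> : x / y = 1 + (x - y) / y by field; rewrite gt_eqF.
lra.
Qed.

Lemma expR1_le4 : expR 1 <= 4 :> R.
Proof.
have h : 1 / 2 <= expR (- (1/2)) :> R.
  apply: le_trans (expR_ge1Dx _); lra.
have pq : expR (1/2) * expR (- (1/2)) = 1 :> R by rewrite -expRD subrr expR0.
have e1 : expR 1 = expR (1/2) * expR (1/2) :> R by rewrite -expRD; congr expR; field.
have p0 := expR_gt0 (1/2 : R).
rewrite e1; nra.
Qed.

Lemma ln_diff_le' {x y} : 0 < x -> 0 < y -> (ln x - ln y) * y <= x - y.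
Proof.
move=> x0 y0; have := ln_diff_le x0 y0.
by rewrite ler_pdivlMr.
Qed.

Lemma ln25_gt1 : 1 < ln (25 : R).
Proof.
have e4 := expR1_le4.
rewrite -[X in X < _](expRK 1) ltr_ln ?posrE ?expR_gt0//.
lra.
Qed.

Section Sum.
Variable N : R.
Hypothesis N1 : 1 <= N.
Definition LL (k : nat) : R := ln (25 * N / k%:R).
Definition phi (k : nat) : R := ln (ln (LL k)).
Definition bb (k : nat) : R := (8 * (k%:R + 1) * LL k * ln (LL k))^-1.

Lemma LL_gt1 {k} : (1 <= k)%N -> k%:R <= N -> 1 < LL k.
Proof.
move=> k1 kN; apply: lt_le_trans ln25_gt1 _.
have k0 : 0 < k%:R :> R by rewrite ltr0n.
rewrite /LL ler_ln ?posrE ?divr_gt0//; last lra.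
by rewrite ler_pdivlMr//; nra.
Qed.

Lemma lnLL_gt0 {k} : (1 <= k)%N -> k%:R <= N -> 0 < ln (LL k).
Proof. by move=> k1 kN; apply: ln_gt0; apply: LL_gt1. Qed.

Lemma bb_ge0 {k} : (1 <= k)%N -> k%:R <= N -> 0 <= bb k.
Proof.
move=> k1 kN; rewrite /bb invr_ge0.
have := LL_gt1 k1 kN; have := lnLL_gt0 k1 kN.
have : 0 <= k%:R :> R by [].
move=> *; apply: mulr_ge0; last lra.
apply: mulr_ge0; last lra. lra.
Qed.

Lemma phi_step {k} : (1 <= k)%N -> k.+1%:R <= N -> phi k - phi k.+1 <= 24 * bb k.+1.
Proof.
move=> k1 kN.
have k0 : 1 <= k%:R :> R by rewrite ler1n.
have kN' : k%:R <= N by apply: le_trans kN; rewrite ler_nat.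
have P1 := LL_gt1 (leqW k1) kN.
have Q0 := lnLL_gt0 (leqW k1) kN.
have P1' := LL_gt1 k1 kN'.
have Q0' := lnLL_gt0 k1 kN'.
set P := LL k.+1 in P1 Q0 *; set Q := ln P in Q0 *.
have h1 := ln_diff_le' Q0' Q0.
have h2 := ln_diff_le' (lt_trans ltr01 P1') (lt_trans ltr01 P1).
have h3 : (LL k - P) * k%:R <= 1.
  have kS0 : 0 < k.+1%:R :> R by rewrite ltr0n.
  have := @ln_diff_le' (25 * N / k%:R) (25 * N / k.+1%:R).
  rewrite !divr_gt0 //; try lra.
  move=> /(_ isT isT); rewrite -/(LL k) -/P.
  have -> : 25 * N / k%:R - 25 * N / k.+1%:R = (25 * N / k.+1%:R) / k%:R.
    rewrite mulrS; field; lra.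
  set A := 25 * N / k.+1%:R.
  have A0 : 0 < A by rewrite divr_gt0//; lra.
  have w1 : k%:R^-1 * k%:R = 1 :> R by rewrite mulVf// gt_eqF//; lra.
  have eP : P = ln A by [].
  rewrite -eP => h.
  set w := k%:R^-1 in w1 h.
  have h' : (LL k - P) * A <= A * w by [].
  clearbody A w. nra.
rewrite /bb -/P -/Q /phi -/Q.
rewrite -[k.+1%:R]natr1.
set u := ln (ln (LL k)) - ln Q in h1 *.
set v := ln (LL k) - Q in h1 h2 *.
set X := LL k - P in h2 h3 *.
have D0 : 0 < 8 * (k%:R + 1 + 1) * P * Q.
  by apply: mulr_gt0 => //; apply: mulr_gt0; lra.
rewrite ler_pdivlMr //.
have a1 : u * Q * P <= v * P by rewrite ler_pM2r //; lra.
have a2 : u * Q * P <= X by lra.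
have a3 : X * (k%:R + 1 + 1) <= 3 by nra.
have a4 : u * Q * P * (k%:R + 1 + 1) <= X * (k%:R + 1 + 1) by rewrite ler_pM2r//; lra.
have -> : u * (8 * (k%:R + 1 + 1) * P * Q) = 8 * (u * Q * P * (k%:R + 1 + 1)) by ring.
lra.
Qed.

Lemma sum_bb_ge (n : nat) : (1 <= n)%N -> n%:R <= N ->
  phi 1 - phi n <= 24 * \sum_(2 <= k < n.+1) bb k.
Proof.
elim: n => [//|n IH] _ nN.
case: n IH nN => [|n] IH nN.
  by rewrite big_geq // subrr mulr0.
have n1 : (1 <= n.+1)%N by [].
have nN' : n.+1%:R <= N by apply: le_trans nN; rewrite ler_nat.
rewrite big_nat_recr //= mulrDr.
have := IH n1 nN'.
have := phi_step n1 nN.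
lra.
Qed.
End Sum.
End Reals.
Arguments LL {R}. Arguments phi {R}. Arguments bb {R}.

Section H.
Local Open Scope classical_set_scope. Local Open Scope ereal_scope.
Context d (T : measurableType d) (R : realType).
Variable mu : {measure set T -> \bar R}.

Lemma le_integral_nm (f1 f2 : T -> \bar R) :
  (forall x, 0 <= f1 x) -> measurable_fun setT f1 ->
  (forall x, f1 x <= f2 x) ->
  \int[mu]_x f1 x <= \int[mu]_x f2 x.
Proof.
move=> h10 mh1 h12.
have h20 x : 0 <= f2 x by apply: le_trans (h12 x).
pose g1 := nnsfun_approx measurableT mh1.
rewrite (@nd_ge0_integral_lim _ _ _ _ _ g1)//; last 2 first.
  by move=> x m n mn; exact/lefP/nd_nnsfun_approx.
  by move=> x; exact: cvg_nnsfun_approx.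
apply: lime_le.
  by apply: is_cvg_sintegral => // t m n mn; exact/lefP/nd_nnsfun_approx.
near=> n; rewrite ge0_integralTE//; apply: ereal_sup_ubound => /=.
exists (g1 n) => // t; rewrite (le_trans _ (h12 _))//.
have := leey (f1 t); rewrite le_eqVlt => /predU1P[->|ftoo].
  by rewrite leey.
have h1tfin : f1 t \is a fin_num.
  by rewrite fin_numE gt_eqF/= ?lt_eqF// (lt_le_trans _ (h10 t)).
have /= := @cvg_nnsfun_approx _ _ _ _ measurableT _ mh1 (fun x _ => h10 x) t Logic.I.
rewrite -(fineK h1tfin) => /fine_cvgP[ft_near].
set u_ := (X in X --> _) => u_h1.
have <- : lim u_ = fine (f1 t) by exact/cvg_lim.
rewrite lee_fin; apply: nondecreasing_cvgn_le.
  by move=> // a b ab; rewrite /u_ /=; exact/lefP/nd_nnsfun_approx.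
by apply/cvg_ex; eexists; exact: u_h1.
Unshelve. all: by end_near. Qed.
End H.

Section S. Variable R : realType.
Local Open Scope ereal_scope.
Local Open Scope classical_set_scope.
Definition L2 := (@lebesgue_measure R \x @lebesgue_measure R)%E.
Lemma L2_sigma_finite : sigma_finite setT L2.
Proof.
have /sigma_finiteP[F [TF ndF Foo]] := sigma_finiteT (@lebesgue_measure R).
exists (fun n => F n `*` F n).
 rewrite -setXTT TF predeqE => -[x y]; split.
    move=> [/= [n _ Fnx] [k _ Gky]]; exists (maxn n k) => //; split.
    - by move: x Fnx; exact/subsetPset/ndF/leq_maxl.
    - by move: y Gky; exact/subsetPset/ndF/leq_maxr.
  by move=> [n _ []/= ? ?]; split; exists n.
move=> k; have [? ?] := Foo k.
split; first exact: measurableX.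
by rewrite /L2 product_measure1E// lte_mul_pinfty// ge0_fin_numE.
Qed.
Lemma L2_0 : L2 set0 = 0. Proof. exact: measure0. Qed.
Lemma L2_ge0 A : 0 <= L2 A. Proof. exact: measure_ge0. Qed.
Lemma L2_sa : semi_sigma_additive L2. Proof. exact: measure_semi_sigma_additive. Qed.
HB.instance Definition _ := isMeasure.Build _ _ _ L2 L2_0 L2_ge0 L2_sa.
HB.instance Definition _ := Measure_isSigmaFinite.Build _ _ _ L2 L2_sigma_finite.
Definition mu3 := (@lebesgue_measure R \x L2)%E.
Lemma mu3E : @lebesgue3 R = mu3. Proof. by []. Qed.
End S.

Section Key.
Variable R : realType.
Variable n : nat.
Hypothesis n1 : (1 <= n)%N.
Let N : R := n%:R.
Let N1 : 1 <= N. Proof. by rewrite /N ler1n. Qed.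

Definition x0 : R3 R := (0, (0, 0)).
Definition y0 : R3 R := (N + 1, (0, 0)).
Definition aa (k : nat) : R := Num.sqrt (k%:R / (50 * N)).
Definition cc (k : nat) : R :=
  2^-1 * (k%:R + 1)^-1 * (2 * k%:R / (25 * N) * LL N k * ln (LL N k))^-1.

Lemma expRN1_ge : 4^-1 <= expR (-1) :> R.
Proof.
by rewrite expRN lef_pV2 ?posrE ?expR_gt0// expR1_le4.
Qed.

Lemma fpot_ge (k : nat) (z1 : R) : (1 <= k)%N -> (k <= n)%N ->
  k%:R <= z1 <= k%:R + 4^-1 ->
  (2 * k%:R / (25 * N) * LL N k * ln (LL N k))^-1 <= fpot (z1 / (25 * N)).
Proof.
move=> k1 kn /andP[z1a z1b].
have k0 : 1 <= k%:R :> R by rewrite ler1n.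
have kN : k%:R <= N by rewrite /N ler_nat.
have z10 : 0 < z1 by lra.
set u := z1 / (25 * N).
have u0 : 0 < u by rewrite divr_gt0//; lra.
have uinv : u^-1 = 25 * N / z1 by rewrite /u invf_div.
have ui1 : 20 <= u^-1.
  rewrite uinv ler_pdivlMr//; lra.
have ui2 : u^-1 <= 25 * N / k%:R.
  rewrite uinv ler_pM2l; last lra.
  rewrite lef_pV2 ?posrE//; lra.
have u_small : u < expR (-1).
  apply: lt_le_trans expRN1_ge.
  rewrite -(invrK u) ltf_pV2 ?posrE ?invr_gt0//; lra.
have lnu : `|ln u| = ln u^-1.
  rewrite lnV ?posrE// ler0_norm//; apply: ln_le0.
  have := expRN1_ge; have : expR (-1) <= 1 :> R by rewrite -[X in _ <= X]expR0 ler_expR; lra.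
  lra.
have e4 := expR1_le4 R.
have lu1 : 1 < ln u^-1.
  rewrite -[X in X < _](expRK 1) ltr_ln ?posrE ?expR_gt0//; lra.
have luL : ln u^-1 <= LL N k.
  rewrite /LL ler_ln ?posrE//; last (rewrite divr_gt0//; lra).
  by rewrite invr_gt0.
have llu0 : 0 < ln (ln u^-1) by apply: ln_gt0.
have lluL : ln (ln u^-1) <= ln (LL N k).
  rewrite ler_ln ?posrE//; lra.
have u2 : u <= 2 * k%:R / (25 * N).
  rewrite /u ler_pM2r ?invr_gt0//; lra.
rewrite /fpot ifT; last by apply/andP; split.
rewrite lnu lef_pV2 ?posrE; first last.
- apply: mulr_gt0; last lra. apply: mulr_gt0; first exact: u0. lra.
- apply: mulr_gt0; last lra. apply: mulr_gt0; last lra. rewrite divr_gt0//; lra.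
apply: ler_pM; [apply: mulr_ge0; lra|lra| |exact: lluL].
apply: ler_pM; lra.
Qed.

Definition Ik (k : nat) : set R := `[- aa k, aa k]%classic.
Definition Jk (k : nat) : set R := `[k%:R, k%:R + 4^-1]%classic.
Definition Box (k : nat) : set (R3 R) := Jk k `*` (Ik k `*` Ik k).

Lemma aa2 k : aa k ^+ 2 = k%:R / (50 * N).
Proof. have N1' := N1. by rewrite sqr_sqrtr// divr_ge0// mulr_ge0//; lra. Qed.

Lemma key k z : (1 <= k)%N -> (k <= n)%N -> Box k z ->
  cc k <= Kker 1 (sub3 z x0) y0 * `|Vn n z|.
Proof.
move=> k1 kn.
case: z => z1 [z2 z3] /= [/= Z1 [/= Z2 Z3]].
move: Z1 Z2 Z3; rewrite /Ik /Jk /= => Z1 Z2 Z3.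
move: Z1 Z2 Z3; rewrite !in_itv /= => /andP[a1 b1] /andP[a2 b2] /andP[a3 b3].
have k0 : 1 <= k%:R :> R by rewrite ler1n.
have kN : k%:R <= N by rewrite /N ler_nat.
have A2 := aa2 k.
have A0 : 0 <= aa k by apply: sqrtr_ge0.
set a := aa k in a2 b2 a3 b3 A2 A0.
have s1 : z2 * z2 + z3 * z3 <= k%:R / (25 * N).
  have -> : k%:R / (25 * N) = 2 * (k%:R / (50 * N)) by field; lra.
  rewrite -A2; nra.
have s2 : (z2 * z2 + z3 * z3) * N <= k%:R / 25.
  have : k%:R / (25 * N) * N = k%:R / 25 by field; lra.
  nra.
have s3 : z2 * z2 + z3 * z3 <= 1 / 25.
  have : k%:R / (25 * N) <= 1/25.
    rewrite ler_pdivrMr; last lra.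
    have -> : 1 / 25 * (25 * N) = N by field.
    done.
  lra.
rewrite /sub3 /x0 /= !subr0.
set q := z1 * z1 + z2 * z2 + z3 * z3.
have q0 : 0 <= q by rewrite /q; nra.
have nz : norm3 (z1, (z2, z3)) = Num.sqrt q by [].
set Nz := Num.sqrt q in nz.
have Nz0 : 0 <= Nz by apply: sqrtr_ge0.
have Nz2 : Nz * Nz = q by rewrite -expr2 sqr_sqrtr.
have ny : norm3 y0 = N + 1.
  rewrite /norm3 /dot3 /y0 /= !mulr0 !addr0 -expr2 sqrtr_sqr gtr0_norm//; lra.
have dy : dot3 (z1, (z2, z3)) y0 = z1 * (N + 1).
  by rewrite /dot3 /y0 /= !mulr0 !addr0.
have Nzk : Nz <= k%:R + 1 by rewrite /q in Nz2; nra.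
have Nz1 : z1 <= Nz by rewrite /q in Nz2; nra.
have E1 : (Nz - z1) * (50 * N) <= 1.
  have h1 : (Nz - z1) * (Nz + z1) = z2 * z2 + z3 * z3 by rewrite /q in Nz2; nra.
  nra.
rewrite /Kker nz ny dy mul1r ifT; last lra.
rewrite mulr1.
set E := (Nz * (N + 1) - z1 * (N + 1)) / 2.
have E2 : E <= 1 / 2.
  rewrite /E.
  have : (Nz - z1) * (N + 1) <= 1 / 25.
    have : (Nz - z1) * N <= 1 / 50 by nra.
    nra.
  lra.
have eE : 1 / 2 <= expR (- E) by apply: le_trans (expR_ge1Dx _); lra.
have iNz : (k%:R + 1)^-1 <= Nz^-1.
  rewrite lef_pV2 ?posrE//; lra.
have fp : (2 * k%:R / (25 * N) * LL N k * ln (LL N k))^-1 <= fpot (z1 / (25 * N)).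
  by apply: fpot_ge => //; rewrite a1 b1.
have Dp : 0 < (2 * k%:R / (25 * N) * LL N k * ln (LL N k))^-1.
  have := @LL_gt1 R N k k1 kN; have := @lnLL_gt0 R N k k1 kN.
  move=> *; rewrite invr_gt0; apply: mulr_gt0; last lra.
  apply: mulr_gt0; last lra. rewrite divr_gt0//; lra.
have S1 : 1 <= \sum_(1 <= j < n.+1)
    \1_(Ccyl j (Num.sqrt (j%:R / (25 * n%:R)))) (z1, (z2, z3)) :> R.
  rewrite (bigD1_seq k) /=; first last.
  - exact: iota_uniq.
  - by rewrite mem_index_iota k1 ltnS.
  rewrite indicE mem_set; last first.
    rewrite /Ccyl /=; split; first by rewrite a1 b1.
    rewrite sqr_sqrtr; last by rewrite divr_ge0// mulr_ge0//; lra.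
    rewrite !expr2 -/N; lra.
  rewrite -[X in X <= _]addr0 lerD2l; apply: sumr_ge0 => j _.
  by rewrite indicE; case: (_ \in _).
have VV : fpot (z1 / (25 * N)) <= `|Vn n (z1, (z2, z3))|.
  rewrite /Vn /= ger0_norm; last first.
    apply: mulr_ge0; first lra. lra.
  rewrite -[X in X <= _]mulr1 ler_pM2l //; lra.
rewrite /cc.
apply: ler_pM; [|lra| |exact: le_trans VV].
- apply: mulr_ge0; first lra. rewrite invr_ge0; lra.
- apply: ler_pM; [lra|rewrite invr_ge0; lra|lra|exact: iNz].
Qed.

Lemma Box_meas k : measurable (Box k).
Proof.
apply: measurableX; first exact: measurable_itv.
by apply: measurableX; exact: measurable_itv.
Qed.

Lemma Box_vol k : (1 <= k)%N -> mu3 R (Box k) = (k%:R / (50 * N))%:E.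
Proof.
move=> k1. have N1' := N1.
have k0 : 1 <= k%:R :> R by rewrite ler1n.
have A2 := aa2 k.
have A0 : 0 < aa k.
  rewrite /aa sqrtr_gt0 divr_gt0//; lra.
have h : L2 R (Ik k `*` Ik k) =
   (lebesgue_measure (Ik k) * lebesgue_measure (Ik k))%E.
  by rewrite /L2 product_measure1E//; exact: measurable_itv.
rewrite /mu3 /Box product_measure1E; first last.
- by apply: measurableX; exact: measurable_itv.
- exact: measurable_itv.
transitivity (lebesgue_measure (Jk k) *
   (lebesgue_measure (Ik k) * lebesgue_measure (Ik k)))%E.
  by congr (_ * _)%E; exact: h.
rewrite /Ik /Jk !lebesgue_measure_itv /= !lte_fin ifT; last lra.
rewrite ifT; last lra.
rewrite -!EFinD -!EFinM; congr EFin.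
rewrite -A2 expr2.
have -> : k%:R + 4^-1 - k%:R = 4^-1 :> R by ring.
by field.
Qed.

Lemma cc_gt0 k : (1 <= k)%N -> (k <= n)%N -> 0 < cc k.
Proof.
move=> k1 kn. have N1' := N1.
have k0 : 1 <= k%:R :> R by rewrite ler1n.
have kN : k%:R <= N by rewrite /N ler_nat.
have := @LL_gt1 R N k k1 kN; have := @lnLL_gt0 R N k k1 kN.
move=> *; rewrite /cc; apply: mulr_gt0; first apply: mulr_gt0.
- lra.
- rewrite invr_gt0; lra.
- rewrite invr_gt0; apply: mulr_gt0; last lra.
  apply: mulr_gt0; last lra. rewrite divr_gt0//; lra.
Qed.

Definition ccp k := Num.max (cc k) 0.

Lemma ccp_ge0 k : 0 <= ccp k.
Proof. by rewrite /ccp le_max lexx orbT. Qed.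

Lemma ccpE k : (1 <= k)%N -> (k <= n)%N -> ccp k = cc k.
Proof. by move=> k1 kn; rewrite /ccp max_l// ltW// cc_gt0. Qed.

Definition Fz (z : R3 R) : R := Kker 1 (sub3 z x0) y0 * `|Vn n z|.

Lemma Fz_ge0 z : 0 <= Fz z.
Proof.
rewrite /Fz /Kker; apply: mulr_ge0 => //; apply: mulr_ge0.
  apply: mulr_ge0; first exact: ltW (expR_gt0 _).
  by rewrite invr_ge0 sqrtr_ge0.
by case: ifP.
Qed.

Lemma Box_disj j k z : Box j z -> Box k z -> j = k.
Proof.
case: z => z1 z2 [/= + _] [/= + _]; rewrite /Jk /= !in_itv /=.
move=> /andP[a1 b1] /andP[a2 b2].
apply/eqP; rewrite eqn_leq; apply/andP; split; rewrite leqNgt; apply/negP => h.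
- have : k.+1%:R <= j%:R :> R by rewrite ler_nat.
  rewrite -natr1; lra.
- have : j.+1%:R <= k%:R :> R by rewrite ler_nat.
  rewrite -natr1; lra.
Qed.

Definition Gz (z : R3 R) : \bar R := (\sum_(1 <= k < n.+1) (ccp k * \1_(Box k) z)%:E)%E.

Lemma Gz_le z : (Gz z <= (Fz z)%:E)%E.
Proof.
rewrite /Gz sumEFin lee_fin.
case: (pselect (exists k, (1 <= k <= n)%N /\ Box k z)) => [[k [/andP[k1 kn] Bz]]|nb].
- rewrite (bigD1_seq k) /=; first last.
  + exact: iota_uniq.
  + by rewrite mem_index_iota k1 ltnS.
  rewrite big1_seq ?addr0; last first.
    move=> j /andP[jk _]; rewrite indicE memNset ?mulr0//.
    by move=> Bj; move: jk; rewrite (Box_disj _ _ _ Bj Bz) eqxx.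
  rewrite indicE mem_set// mulr1 ccpE//.
  exact: key.
- rewrite big1_seq; first exact: Fz_ge0.
  move=> j; rewrite mem_index_iota => /andP[j1 jn].
  rewrite indicE memNset ?mulr0// => Bj; apply: nb; exists j; split => //.
Qed.

Lemma Gz_meas : measurable_fun setT Gz.
Proof.
apply: emeasurable_sum => k.
apply/measurable_EFinP; apply: measurable_funM => //.
apply: measurable_indic; exact: Box_meas.
Qed.

Lemma int_Gz : (\int[mu3 R]_z Gz z =
  \sum_(1 <= k < n.+1) (ccp k * (k%:R / (50 * N)))%:E)%E.
Proof.
rewrite /Gz ge0_integral_sum//; first last.
- by move=> k z _; rewrite lee_fin mulr_ge0// ?ccp_ge0.
- move=> k; apply/measurable_EFinP; apply: measurable_funM => //.
  apply: measurable_indic; exact: Box_meas.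
apply: eq_big_nat => k /andP[k1 kn].
transitivity ((ccp k)%:E * \int[mu3 R]_(x in setT) (\1_(Box k) x)%:E)%E.
  apply: (@integralZl_indic _ _ _ (mu3 R) setT measurableT (fun _ => Box k) (ccp k)); last exact: Box_meas.
  by move=> h; have := ccp_ge0 k; rewrite leNgt h.
rewrite integral_indic//; last exact: Box_meas.
rewrite setIT EFinM; congr (_ * _)%E.
exact: Box_vol.
Qed.

Lemma main_bound : (\sum_(1 <= k < n.+1) (ccp k * (k%:R / (50 * N)))%:E <=
  \int[@lebesgue3 R]_z (Kker 1 (sub3 z x0) y0 * `|Vn n z|)%:E)%E.
Proof.
rewrite -int_Gz.
change (\int[mu3 R]_z Gz z <= \int[mu3 R]_z (Fz z)%:E)%E.
apply: le_integral_nm.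
- by move=> z; rewrite /Gz; apply: sume_ge0 => k _; rewrite lee_fin mulr_ge0// ?ccp_ge0.
- exact: Gz_meas.
- exact: Gz_le.
Qed.
End Key.

Lemma real_bound (R : realType) (n : nat) (M : R) : (1 <= n)%N ->
  expR (expR (expR M)) <= n%:R ->
  M - 25 <= 24 * \sum_(1 <= k < n.+1) (ccp R n k * (k%:R / (50 * n%:R))).
Proof.
move=> n1 nX.
set N : R := n%:R.
have N1 : 1 <= N by rewrite /N ler1n.
have e := @expR_gt0 R.
have eq k : (1 <= k)%N -> (k <= n)%N -> ccp R n k * (k%:R / (50 * N)) = bb N k.
  move=> k1 kn; rewrite ccpE// /cc /bb.
  have k0 : 1 <= k%:R :> R by rewrite ler1n.
  have kN : k%:R <= N by rewrite /N ler_nat.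
  have := @LL_gt1 R N k k1 kN; have := @lnLL_gt0 R N k k1 kN.
  move=> h1 h2.
  field; rewrite ?gt_eqF//; try lra.
  all: try (apply: mulr_gt0; lra).

have S1 : \sum_(1 <= k < n.+1) (ccp R n k * (k%:R / (50 * N))) =
          \sum_(1 <= k < n.+1) bb N k.
  apply: eq_big_nat => k /andP[k1 kn]; apply: eq => //.
have S2 : \sum_(2 <= k < n.+1) bb N k <= \sum_(1 <= k < n.+1) bb N k.
  rewrite (big_ltn (m:=1)) //; rewrite lerDr.
  by apply: (@bb_ge0 R N 1) => //; rewrite N1.
have S3 := @sum_bb_ge R N n n1 (lexx N).
have Pn : phi N n < 25.
  rewrite /phi /LL.
  have -> : 25 * N / n%:R = 25 by rewrite /N; field; rewrite gt_eqF//; lra.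
  have l25 := ln25_gt1 R.
  have ll25 : 0 < ln (ln (25 : R)) by apply: ln_gt0.
  have := ln_sublinear ll25; have := ln_sublinear (lt_trans ltr01 l25).
  have := @ln_sublinear R 25 ltac:(lra).
  lra.
have P1 : M <= phi N 1.
  rewrite /phi /LL divr1.
  have h1 : expR (expR M) <= ln (25 * N).
    rewrite -[X in X <= _]expRK ler_ln ?posrE ?e//; lra.
  have h2 : expR M <= ln (ln (25 * N)).
    have l0 : 0 < ln (25 * N) by apply: ln_gt0; lra.
    rewrite -[X in X <= _]expRK ler_ln ?posrE ?e//; lra.
  have l1 : 0 < ln (ln (25 * N)) by apply: lt_le_trans h2.
  rewrite -[X in X <= _]expRK ler_ln ?posrE ?e//; lra.
rewrite S1; lra.
Qed.


Theorem lemma4p3 (R : realType) :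
  exists ns : nat -> nat, forall i : nat,
    (((4 : R) ^+ i)%:E <= Knorm (Vn (ns i)) 1)%E.
Proof.
pose M (i : nat) : R := 24 * 4 ^+ i + 25.
exists (fun i => (Num.trunc (expR (expR (expR (M i))))).+1) => i.
set n := (Num.trunc _).+1.
have n1 : (1 <= n)%N by [].
have nX : expR (expR (expR (M i))) <= n%:R.
  by apply: ltW; apply: truncnS_gt.
have RB := @real_bound R n (M i) n1 nX.
have MB := @main_bound R n n1.
refine (le_trans _ (le_trans MB _)).
  rewrite sumEFin lee_fin; rewrite /M in RB; lra.
apply: ereal_sup_ubound => /=.
exists (x0 R) => //; exists (y0 R n) => //.
Qed.
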